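(* For every $q\in K(\!(\mathbf{t})\!)^\circ$ there exist an integer $n\ge1$ and elements $\alpha_1,\dots,\alpha_n\in K$ such that $\operatorname{trop}\big(\prod_{k=1}^n(q-\alpha_k)\big)\ll 1$.
   Context: $K$ is a field of characteristic zero, $\mathbf{t}=(t_1,\dots,t_m)$, $K(\!(\mathbf{t})\!)=\operatorname{Frac}K[\![\mathbf{t}]\!]$. $V\mathbb{B}[\mathbf{t}]$ is the semiring of subsets of $\mathbb{N}^m$ equal to the vertex set of their Newton polyhedron $\operatorname{conv}(\cdot)+\mathbb{R}^m_{\ge0}$, with $a\oplus b$ = vertices of the Newton polyhedron of $a\cup b$, $a\odot b$ = vertices of that of $a+b$; order $a\le b$ iff $a\oplus b=b$. $V\mathbb{B}(\mathbf{t})$ is its fraction semifield, ordered by $a/b\le c/d$ iff $a\odot d\le b\odot c$. $\operatorname{trop}(f)$ is the vertex set of the Newton polyhedron of $\operatorname{Supp}(f)$, $\operatorname{trop}(f/g)=\operatorname{trop}(f)/\operatorname{trop}(g)$, $K(\!(\mathbf{t})\!)^\circ=\{q:\operatorname{trop}(q)\le1\}$. For $a\le b$ in $V\mathbb{B}[\mathbf{t}]$, $a\ll b$ means $a\cap b=\emptyset$; for $\frac ab\le\frac cd$ in $V\mathbb{B}(\mathbf{t})$, $\frac ab\ll\frac cd$ means $a\odot d\ll c\odot b$. *)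

(* Defs.v *)
From HB Require Import structures.
From mathcomp Require Import all_boot all_order all_algebra.
From mathcomp Require Import Rstruct.
From Stdlib Require Import Rdefinitions.

Set Implicit Arguments.
Unset Strict Implicit.
Unset Printing Implicit Defensive.
Import Order.TTheory GRing.Theory Num.Theory.
Local Open Scope ring_scope.

Definition mexp (m : nat) := {ffun 'I_m -> nat}.
Definition mexp0 (m : nat) : mexp m := [ffun => 0%N].

(* Formal power series K[[t_1,...,t_m]]: arbitrary coefficient functions. *)
Definition pseries (K : fieldType) (m : nat) := mexp m -> K.

Section PowerSeries.
Variables (K : fieldType) (m : nat).

(* Cauchy product: (fg)_a = sum_{b <= a} f_b g_{a-b}; b ranges over all
   componentwise-bounded exponent vectors, each exactly once. *)
Definition ps_mul (f g : pseries K m) : pseries K m := fun a =>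
  \sum_(b : {ffun 'I_m -> 'I_((\max_(i < m) a i).+1)} | [forall i, leq (nat_of_ord (b i)) (a i)])
     f [ffun i => nat_of_ord (b i)] * g [ffun i => subn (a i) (nat_of_ord (b i))].

Definition ps_one : pseries K m := fun a => if a == mexp0 m then 1 else 0.

Definition ps_prod (s : seq (pseries K m)) : pseries K m := foldr ps_mul ps_one s.

Definition ps_subsc (f g : pseries K m) (c : K) : pseries K m :=
  fun a => f a - c * g a.

Definition Supp (f : pseries K m) : mexp m -> Prop := fun a => f a <> 0.

End PowerSeries.

Section Tropical.
Variable m : nat.

Definition embedR (a : mexp m) : 'I_m -> R := fun i => (a i)%:R.

(* Newton polyhedron conv(S) + R^m_{>=0}, as a subset of R^m. *)
Definition newton (S : mexp m -> Prop) : ('I_m -> R) -> Prop := fun x =>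
  exists (k : nat) (s : 'I_k -> mexp m) (l : 'I_k -> R),
    (forall j, S (s j)) /\ (forall j, 0 <= l j) /\ \sum_(j < k) l j = 1 /\
    forall i, \sum_(j < k) l j * ((s j) i)%:R <= x i.

Definition extreme (P : ('I_m -> R) -> Prop) (v : 'I_m -> R) : Prop :=
  P v /\ forall (x y : 'I_m -> R) (t : R), P x -> P y -> 0 < t < 1 ->
    (forall i, v i = t * x i + (1 - t) * y i) -> forall i, x i = y i.

Definition vert (S : mexp m -> Prop) : mexp m -> Prop :=
  fun a => extreme (newton S) (embedR a).

Definition VBeq (a b : mexp m -> Prop) : Prop := forall x, a x <-> b x.
Definition VBadd (a b : mexp m -> Prop) : mexp m -> Prop :=
  vert (fun x => a x \/ b x).
Definition VBmul (a b : mexp m -> Prop) : mexp m -> Prop :=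
  vert (fun x => exists y z, a y /\ b z /\ x = [ffun i => addn (y i) (z i)]).
Definition VB1 : mexp m -> Prop := fun x => x = mexp0 m.
Definition VBle (a b : mexp m -> Prop) : Prop := VBeq (VBadd a b) b.
Definition VBll (a b : mexp m -> Prop) : Prop :=
  VBle a b /\ forall x, ~ (a x /\ b x).

(* Fraction semifield VB(t): a/b <= c/d and a/b << c/d, on representatives. *)
Definition VBfrac_le (a b c d : mexp m -> Prop) : Prop :=
  VBle (VBmul a d) (VBmul b c).
Definition VBfrac_ll (a b c d : mexp m -> Prop) : Prop :=
  VBfrac_le a b c d /\ VBll (VBmul a d) (VBmul c b).

End Tropical.

Definition trop (K : fieldType) (m : nat) (f : pseries K m) : mexp m -> Prop :=
  vert (Supp f).

(* Main.v *)
Require Import Defs.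
From HB Require Import structures.
From mathcomp Require Import all_boot all_order all_algebra.
From mathcomp Require Import Rstruct.
From Stdlib Require Import Rdefinitions.
From mathcomp Require Import ring lra zify.
From Stdlib Require Import Classical FunctionalExtensionality PropExtensionality.
Set Implicit Arguments. Unset Strict Implicit. Unset Printing Implicit Defensive.
Import Order.TTheory GRing.Theory Num.Theory.
Local Open Scope ring_scope.
Definition Q {m} (S : mexp m -> Prop) (c : R) (x : 'I_m -> R) : Prop :=
  exists (k : nat) (s : 'I_k -> mexp m) (l : 'I_k -> R),
    (forall j, S (s j)) /\ (forall j, 0 <= l j) /\ \sum_(j < k) l j = c /\
    forall i, \sum_(j < k) l j * ((s j) i)%:R <= x i.
Arguments Q {m} S c%_ring_scope x.

Lemma Q_up m (S : mexp m -> Prop) c x y :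
  Q S c x -> (forall i, x i <= y i) -> Q S c y.
Proof.
move=> [k [s [l [H1 [H2 [H3 H4]]]]]] Hxy; exists k, s, l.
split; first by []. split; first by []. split; first by [].
by move=> i; apply: le_trans (H4 i) (Hxy i).
Qed.

Lemma Q_eq m (S : mexp m -> Prop) c c' x y :
  Q S c x -> c = c' -> (forall i, x i = y i) -> Q S c' y.
Proof. by move=> HQ <- E; apply: Q_up HQ _ => i; rewrite E. Qed.

Lemma Q_monoS m (S T : mexp m -> Prop) c x :
  (forall a, S a -> T a) -> Q S c x -> Q T c x.
Proof.
move=> HST [k [s [l [H1 [H2 [H3 H4]]]]]]; exists k, s, l.
by split; [move=> j; apply: HST|].
Qed.

Lemma Q_add m (S : mexp m -> Prop) c1 c2 x1 x2 :
  Q S c1 x1 -> Q S c2 x2 -> Q S (c1 + c2) (fun i => x1 i + x2 i).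
Proof.
move=> [k1 [s1 [l1 [Hs1 [Hl1 [Hc1 Hx1]]]]]] [k2 [s2 [l2 [Hs2 [Hl2 [Hc2 Hx2]]]]]].
exists (k1 + k2)%N,
  (fun j => match split j with inl a => s1 a | inr b => s2 b end),
  (fun j => match split j with inl a => l1 a | inr b => l2 b end).
have EL : forall a, split (lshift k2 a) = inl a := fun a => unsplitK (inl a).
have ER : forall b, split (rshift k1 b) = inr b := fun b => unsplitK (inr b).
split; first by move=> j; case: (split j).
split; first by move=> j; case: (split j).
split.
  rewrite big_split_ord /=; congr (_ + _).
    by rewrite -Hc1; apply: eq_bigr => a _; rewrite EL.
  by rewrite -Hc2; apply: eq_bigr => a _; rewrite ER.
move=> i; rewrite big_split_ord /=; apply: lerD.
  by apply: le_trans (Hx1 i); rewrite le_eqVlt; apply/orP; left; apply/eqP;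
    apply: eq_bigr => a _; rewrite EL.
by apply: le_trans (Hx2 i); rewrite le_eqVlt; apply/orP; left; apply/eqP;
  apply: eq_bigr => a _; rewrite ER.
Qed.

Lemma Q_scale m (S : mexp m -> Prop) a c x :
  0 <= a -> Q S c x -> Q S (a * c) (fun i => a * x i).
Proof.
move=> Ha [k [s [l [H1 [H2 [H3 H4]]]]]].
exists k, s, (fun j => a * l j); split => //.
split; first by move=> j; apply: mulr_ge0.
split; first by rewrite -mulr_sumr H3.
move=> i; apply: le_trans (ler_wpM2l Ha (H4 i)).
by rewrite mulr_sumr le_eqVlt; apply/orP; left; apply/eqP;
  apply: eq_bigr => j _; rewrite mulrA.
Qed.

Lemma Q_zero m (S : mexp m -> Prop) x : (forall i, 0 <= x i) -> Q S 0 x.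
Proof.
move=> Hx; exists 0%N, (fun _ => mexp0 m),
  (fun _ => 0); split; first by case.
split => //; split; first by rewrite big_ord0.
by move=> i; rewrite big_ord0.
Qed.

Lemma Q_single m (S : mexp m -> Prop) a (s : mexp m) :
  S s -> 0 <= a -> Q S a (fun i => a * (s i)%:R).
Proof.
move=> Hs Ha; exists 1%N, (fun _ => s), (fun _ => a); split => //.
split => //; split; first by rewrite big_ord1.
by move=> i; rewrite big_ord1.
Qed.

Lemma Q_single1 m (S : mexp m -> Prop) (s : mexp m) :
  S s -> Q S 1 (embedR s).
Proof. by move=> Hs; apply: Q_eq (Q_single Hs ler01) _ _ => // i; rewrite mul1r. Qed.

Lemma Q_ge0 m (S : mexp m -> Prop) c x : Q S c x -> forall i, 0 <= x i.
Proof.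
move=> [k [s [l [H1 [H2 [H3 H4]]]]]] i; apply: le_trans (H4 i).
by apply: sumr_ge0 => j _; apply: mulr_ge0.
Qed.

Lemma Q_c_ge0 m (S : mexp m -> Prop) c x : Q S c x -> 0 <= c.
Proof. by move=> [k [s [l [H1 [H2 [H3 H4]]]]]]; rewrite -H3; apply: sumr_ge0. Qed.

Lemma Q_scale1 m (S : mexp m -> Prop) w p :
  0 <= w -> (w != 0 -> Q S 1 p) -> Q S w (fun i => w * p i).
Proof.
move=> Hw Hp; have [->|nz] := eqVneq w 0.
  by apply: Q_zero => i; rewrite mul0r.
apply: Q_eq (Q_scale Hw (Hp nz)) _ _; [exact: mulr1 | by []].
Qed.

Lemma Q_gen m (S : mexp m -> Prop) k (p : 'I_k -> 'I_m -> R) (w : 'I_k -> R) :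
  (forall j, 0 <= w j) -> (forall j, w j != 0 -> Q S 1 (p j)) ->
  Q S (\sum_(j < k) w j) (fun i => \sum_(j < k) w j * p j i).
Proof.
elim: k p w => [|k IH] p w Hw Hp.
  have H0 : Q S 0 (fun i => 0) by apply: Q_zero.
  apply: Q_eq H0 _ _; first by rewrite big_ord0.
  by move=> i; rewrite big_ord0.
have H1 := IH (fun j => p (widen_ord (leqnSn k) j)) (fun j => w (widen_ord (leqnSn k) j))
  (fun j => Hw _) (fun j => Hp _).
have H2 := Q_scale1 (Hw ord_max) (Hp ord_max).
apply: Q_eq (Q_add H1 H2) _ _; first by rewrite big_ord_recr.
by move=> i; rewrite big_ord_recr.
Qed.

Lemma Q_closure m (S T : mexp m -> Prop) c x :
  (forall a, T a -> Q S 1 (embedR a)) -> Q T c x -> Q S c x.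
Proof.
move=> HT [k [s [l [H1 [H2 [H3 H4]]]]]].
have := Q_gen (p := fun j => embedR (s j)) H2 (fun j _ => HT _ (H1 j)).
by rewrite H3 => HQ; apply: Q_up HQ _.
Qed.

Lemma newton_closure m (S T : mexp m -> Prop) x :
  (forall a, T a -> newton S (embedR a)) -> newton T x -> newton S x.
Proof. exact: Q_closure. Qed.

Lemma newton_convex m (S : mexp m -> Prop) x y t :
  newton S x -> newton S y -> 0 <= t <= 1 ->
  newton S (fun i => t * x i + (1 - t) * y i).
Proof.
move=> Hx Hy /andP[t0 t1].
have t1' : 0 <= 1 - t by rewrite subr_ge0.
have := Q_add (Q_scale t0 Hx) (Q_scale t1' Hy).
move=> H; apply: Q_eq H _ _; last by [].
by rewrite !mulr1 addrC subrK.
Qed.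
Lemma ext_ge m (S : mexp m -> Prop) v p : extreme (newton S) v -> newton S p ->
  (forall i, p i <= v i) -> forall i, v i = p i.
Proof.
move=> [Hv Hext] Hp Hpv.
have Hy : newton S (fun i => 2 * v i - p i).
  by apply: Q_up Hv _ => i; have := Hpv i; lra.
have h2 : 2 * (2%:R : R)^-1 = 1 by rewrite divff // pnatr_eq0.
move: ((2%:R : R)^-1) h2 => h h2.
have H01 : 0 < h < 1.
  have h1 : 0 < h by lra.
  have h3 : h < 1 by lra.
  by rewrite h1 h3.
have := Hext p (fun i => 2 * v i - p i) h Hp Hy H01.
have E : forall i, v i = h * p i + (1 - h) * (2 * v i - p i).
  move=> i; have -> : (1 - h) = h by lra.
  rewrite -mulrDr addrC subrK mulrA (mulrC h) h2 mul1r //.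
move=> /(_ E) H i; have := H i; lra.
Qed.

Lemma ext_split m (S : mexp m -> Prop) v x y t : extreme (newton S) v ->
  newton S x -> newton S y -> 0 < t < 1 ->
  (forall i, v i = t * x i + (1 - t) * y i) -> forall i, v i = x i.
Proof.
move=> [Hv Hext] Hx Hy Ht E i.
have := Hext x y t Hx Hy Ht E i => Exy.
by rewrite E -Exy mulrBl mul1r addrC subrK.
Qed.

Lemma Q_split m (S : mexp m -> Prop) k (s : 'I_k -> mexp m) (l : 'I_k -> R) (a : mexp m) :
  (forall j, S (s j)) -> (forall j, 0 <= l j) ->
  Q (fun b => S b /\ b <> a)
    (\sum_(j < k) l j - \sum_(j < k) (if s j == a then l j else 0))
    (fun i => \sum_(j < k) (if s j == a then 0 else l j) * (s j i)%:R) /\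
  forall i, \sum_(j < k) l j * (s j i)%:R =
    (\sum_(j < k) (if s j == a then l j else 0)) * (a i)%:R +
    \sum_(j < k) (if s j == a then 0 else l j) * (s j i)%:R.
Proof.
move=> Hs Hl; split.
  have Hw : forall j, 0 <= (if s j == a then 0 else l j) by move=> j; case: eqP.
  have Hp : forall j, (if s j == a then 0 else l j) != 0 ->
      Q (fun b => S b /\ b <> a) 1 (embedR (s j)).
    move=> j; case: (s j =P a) => [_|ne _]; first by rewrite eqxx.
    by apply: Q_single1; split.
  have H := Q_gen Hw Hp.
  apply: Q_eq H _ _; last by [].
  rewrite -sumrB; apply: eq_bigr => j _; case: eqP => _; by rewrite ?subrr ?subr0.
move=> i; rewrite mulr_suml -big_split; apply: eq_bigr => j _ /=.
by case: eqP => [->|_]; rewrite ?mul0r ?addr0 ?add0r.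
Qed.

Lemma ext_in m (S : mexp m -> Prop) v : extreme (newton S) v ->
  exists a, S a /\ forall i, v i = (a i)%:R.
Proof.
move=> Hext; have Hv := Hext.1.
case: (Hv) => k [s [l [Hs [Hl [Hsum Hle]]]]].
have [j0 Hj0] : exists j0, l j0 != 0.
  apply: NNPP => H.
  have : \sum_(j < k) l j = 0.
    apply: big1 => j _; apply/eqP; apply: contraT => nz; exfalso; apply: H; by exists j.
  by rewrite Hsum => /eqP; rewrite oner_eq0.
set a := s j0.
have [HQ Heq] := Q_split a Hs Hl.
set al := \sum_(j < k) (if s j == a then l j else 0) in HQ Heq.
set Z := fun i => \sum_(j < k) (if s j == a then 0 else l j) * (s j i)%:R in HQ Heq.
have alge : l j0 <= al.
  rewrite /al (bigD1 j0) //= eqxx lerDl; apply: sumr_ge0 => j _; by case: eqP.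
have lpos : 0 < l j0 by rewrite lt_def Hj0 Hl.
have alle1 : al <= 1 by have := Q_c_ge0 HQ; rewrite Hsum subr_ge0.
exists a; split; first exact: Hs j0.
have Hva : newton S (embedR a) := Q_single1 (Hs j0).
have HZ := Q_ge0 HQ.
have [al1|aln1] := eqVneq al 1.
  move=> i; apply: (ext_ge Hext Hva) => j.
  apply: le_trans (Hle j); rewrite Heq al1 mul1r /embedR lerDl; exact: HZ.
have allt1 : al < 1 by rewrite lt_neqAle aln1.
have Hc : 0 < 1 - al by rewrite subr_gt0.
set W := fun i => (1 - al)^-1 * Z i.
have HW : newton S W.
  have Hi : 0 <= (1 - al)^-1 by rewrite invr_ge0 ltW.
  have := Q_scale Hi HQ.
  rewrite Hsum mulVf ?gt_eqF // => H.
  by apply: Q_monoS H => b [].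
have Hp := newton_convex Hva HW (t := al).
have Hal01 : 0 <= al <= 1 by rewrite alle1 andbT; apply: le_trans (ltW lpos) alge.
have Hp' := Hp Hal01.
have Ep : forall i, v i = al * embedR a i + (1 - al) * W i.
  apply: (ext_ge Hext Hp') => i.
  by rewrite /W mulrA divff ?gt_eqF // mul1r -Heq.
move=> i; apply: (ext_split Hext Hva HW _ Ep).
by rewrite allt1 andbT; apply: lt_le_trans lpos alge.
Qed.
Lemma union_lists m (X : eqType) (I : seq X) (S : mexp m -> Prop)
  (P : X -> mexp m -> Prop) :
  (forall x, x \in I -> exists L : seq (mexp m), (forall l, l \in L -> S l) /\
     forall s, P x s -> exists2 l, l \in L & forall i, (l i <= s i)%nat) ->
  exists L : seq (mexp m), (forall l, l \in L -> S l) /\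
     forall s, (exists2 x, x \in I & P x s) -> exists2 l, l \in L & forall i, (l i <= s i)%nat.
Proof.
elim: I => [|x I IH] H.
  by exists [::]; split => // s [x]; rewrite in_nil.
have [L1 [H1 H1']] := H x (mem_head _ _).
have [L2 [H2 H2']] : exists L : seq (mexp m), (forall l, l \in L -> S l) /\
     forall s, (exists2 x, x \in I & P x s) -> exists2 l, l \in L & forall i, (l i <= s i)%nat.
  by apply: IH => y Hy; apply: H; rewrite in_cons Hy orbT.
exists (L1 ++ L2); split.
  by move=> l; rewrite mem_cat => /orP [/H1|/H2].
move=> s [y]; rewrite in_cons => /orP [/eqP -> | Hy] Hp.
  by have [l Hl Hle] := H1' s Hp; exists l => //; rewrite mem_cat Hl.
have [l Hl Hle] := H2' s (ex_intro2 _ _ y Hy Hp).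
by exists l => //; rewrite mem_cat Hl orbT.
Qed.

Lemma dickson_gen m n (J : {set 'I_m}) (S : mexp m -> Prop) : #|J| = n ->
  (forall s t, S s -> S t -> forall i, i \notin J -> s i = t i) ->
  exists L : seq (mexp m), (forall l, l \in L -> S l) /\
     forall s, S s -> exists2 l, l \in L & forall i, (l i <= s i)%nat.
Proof.
elim/ltn_ind: n J S => n IH J S HJ Hfix.
case: (classic (exists s0, S s0)) => [[s0 Hs0]|Hne]; last first.
  by exists [::]; split => // s Hs; exfalso; apply: Hne; exists s.
pose B := (\max_(i < m) s0 i)%nat.
pose P := fun (x : 'I_m * 'I_B) (s : mexp m) => S s /\ x.1 \in J /\ s x.1 = (x.2 : nat).
have Hobl : forall x, x \in enum {: 'I_m * 'I_B} -> exists L : seq (mexp m),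
    (forall l, l \in L -> S l) /\
     forall s, P x s -> exists2 l, l \in L & forall i, (l i <= s i)%nat.
  move=> [j c] _.
  case: (boolP (j \in J)) => jJ; last first.
    by exists [::]; split => // s [_ [/= jJ' _]]; rewrite jJ' in jJ.
  have Hlt : (#|J :\ j| < n)%nat by rewrite -HJ (cardsD1 j J) jJ.
  have Hfix' : forall s t, (fun s => S s /\ s j = c) s -> (fun s => S s /\ s j = c) t ->
      forall i, i \notin J :\ j -> s i = t i.
    move=> s t [Hs Hsj] [Ht Htj] i; rewrite in_setD1 negb_and negbK => /orP [/eqP ->|].
      by rewrite Hsj Htj.
    by apply: Hfix.
  have [L [HL HL']] := IH _ Hlt (J :\ j) (fun s => S s /\ s j = c) erefl Hfix'.
  exists L; split; first by move=> l /HL [].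
  by move=> s [Hs [_ Hsj]]; apply: HL'.
have [L0 [HL0 HL0']] := union_lists Hobl.
exists (s0 :: L0); split.
  by move=> l; rewrite in_cons => /orP [/eqP ->|/HL0].
move=> s Hs.
case: (boolP [forall i, (s0 i <= s i)%nat]) => [/forallP H|].
  by exists s0 => //; rewrite mem_head.
move=> /forallPn [j]; rewrite -ltnNge => Hj.
have jJ : j \in J.
  apply: contraT => jJ; have := Hfix _ _ Hs Hs0 j jJ.
  by move=> E; rewrite E ltnn in Hj.
have HB : (s j < B)%nat by apply: leq_trans Hj _; apply: leq_bigmax.
have [l Hl Hle] := HL0' s (ex_intro2 _ _ (j, Ordinal HB) (mem_enum _ _) (conj Hs (conj jJ erefl))).
by exists l => //; rewrite in_cons Hl orbT.
Qed.

Lemma dickson m (S : mexp m -> Prop) :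
  exists L : seq (mexp m), (forall l, l \in L -> S l) /\
     forall s, S s -> exists2 l, l \in L & forall i, (l i <= s i)%nat.
Proof. by apply: (@dickson_gen m _ setT S erefl) => s t _ _ i; rewrite in_setT. Qed.
Lemma embedR_inj m (a b : mexp m) : (forall i, embedR a i = embedR b i) -> a = b.
Proof. by move=> H; apply/ffunP => i; apply/eqP; rewrite -(eqr_nat R); have := H i; rewrite /embedR => ->. Qed.

Lemma newton_eq m (S T : mexp m -> Prop) :
  (forall x, newton S x <-> newton T x) -> newton S = newton T.
Proof.
move=> H; apply: functional_extensionality => x.
by apply: propositional_extensionality.
Qed.

Lemma vert_eqN m (S T : mexp m -> Prop) : newton S = newton T -> vert S = vert T.
Proof. by rewrite /vert => ->. Qed.

Lemma vert_sub m (S : mexp m -> Prop) a : vert S a -> S a.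
Proof.
move=> /ext_in [b [Hb E]].
by have -> : a = b by apply: embedR_inj.
Qed.

Lemma Q_split_ex m (S : mexp m -> Prop) c x a : Q S c x ->
  exists al (Z : 'I_m -> R), 0 <= al /\ Q (fun b => S b /\ b <> a) (c - al) Z /\
    forall i, al * embedR a i + Z i <= x i.
Proof.
case=> k [s [l [Hs [Hl [Hsum Hle]]]]].
have [HQ Heq] := @Q_split m S k s l a Hs Hl.
exists (\sum_(j < k) (if s j == a then l j else 0)),
  (fun i => \sum_(j < k) (if s j == a then 0 else l j) * (s j i)%:R).
split; first by apply: sumr_ge0 => j _; case: eqP.
split; first by rewrite -Hsum.
by move=> i; rewrite /embedR -Heq.
Qed.

Lemma nonvert_claim m (L : seq (mexp m)) l : l \in L -> ~ vert (fun a => a \in L) l ->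
  newton (fun a => a \in filter (predC1 l) L) (embedR l).
Proof.
move=> Hl Hv.
have HlN : newton (fun a => a \in L) (embedR l) by apply: Q_single1.
have [x [y [t [Hx [Hy [Ht [E [i0 Hi0]]]]]]]] :
  exists x y t, newton (fun a => a \in L) x /\ newton (fun a => a \in L) y /\
    0 < t < 1 /\ (forall i, embedR l i = t * x i + (1 - t) * y i) /\
    exists i, x i <> y i.
  apply: NNPP => H; apply: Hv; split => // x y t Hx Hy Ht E i.
  apply: NNPP => Hxy; apply: H; exists x, y, t.
  split => //; split => //; split => //; split => //; by exists i.
case/andP: Ht => t0 t1.
have [a1 [Z1 [a1ge [HQ1 Hlx]]]] := Q_split_ex l Hx.
have [a2 [Z2 [a2ge [HQ2 Hly]]]] := Q_split_ex l Hy.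
have a1le := Q_c_ge0 HQ1; have a2le := Q_c_ge0 HQ2.
rewrite subr_ge0 in a1le; rewrite subr_ge0 in a2le.
have Ht' : 0 <= 1 - t by lra.
have HW := Q_add (Q_scale (ltW t0) HQ1) (Q_scale Ht' HQ2).
set W := fun i => t * Z1 i + (1 - t) * Z2 i in HW.
set mu := t * a1 + (1 - t) * a2.
have Hc : t * (1 - a1) + (1 - t) * (1 - a2) = 1 - mu by rewrite /mu; ring.
rewrite Hc in HW.
have HlW : forall i, mu * embedR l i + W i <= embedR l i.
  move=> i.
  have h1' := ler_wpM2l (ltW t0) (Hlx i).
  have h2' := ler_wpM2l Ht' (Hly i).
  have -> : mu * embedR l i + W i = t * (a1 * embedR l i + Z1 i) + (1 - t) * (a2 * embedR l i + Z2 i).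
    rewrite /mu /W. ring.
  by apply: le_trans (lerD h1' h2') _; rewrite -E.
have mule1 : mu <= 1.
  have : 0 <= t * (1 - a1) + (1 - t) * (1 - a2).
    by apply: addr_ge0; apply: mulr_ge0; rewrite ?subr_ge0 //; apply: ltW.
  by rewrite Hc subr_ge0.
have [mu1|mun1] := eqVneq mu 1.
  exfalso.
  have ha : t * (1 - a1) = 0 /\ (1 - t) * (1 - a2) = 0.
    have h1 : 0 <= t * (1 - a1) by apply: mulr_ge0; rewrite ?subr_ge0 //; apply: ltW.
    have h2 : 0 <= (1 - t) * (1 - a2) by apply: mulr_ge0; [exact: Ht'|rewrite subr_ge0].
    move: Hc; rewrite mu1 subrr => Hc; split; lra.
  case: ha => /eqP; rewrite mulf_eq0 gt_eqF //= subr_eq0 => /eqP a1e /eqP.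
  rewrite mulf_eq0 subr_eq0 (gt_eqF t1) /= subr_eq0 => /eqP a2e.
  rewrite -a1e subrr in HQ1; rewrite -a2e subrr in HQ2.
  have Z1g := Q_ge0 HQ1; have Z2g := Q_ge0 HQ2.
  have hx : embedR l i0 <= x i0.
    by apply: le_trans (Hlx i0); rewrite -a1e mul1r lerDl; apply: Z1g.
  have hy : embedR l i0 <= y i0.
    by apply: le_trans (Hly i0); rewrite -a2e mul1r lerDl; apply: Z2g.
  have hA : 0 <= t * (x i0 - embedR l i0) by apply: mulr_ge0; [apply: ltW|rewrite subr_ge0].
  have hB : 0 <= (1 - t) * (y i0 - embedR l i0) by apply: mulr_ge0; [|rewrite subr_ge0].
  have hS : t * (x i0 - embedR l i0) + (1 - t) * (y i0 - embedR l i0) = 0.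
    by rewrite (E i0); ring.
  have hA0 : t * (x i0 - embedR l i0) = 0 by lra.
  have hB0 : (1 - t) * (y i0 - embedR l i0) = 0 by lra.
  move: hA0 hB0 => /eqP; rewrite mulf_eq0 gt_eqF //= subr_eq0 => /eqP ex.
  move=> /eqP; rewrite mulf_eq0 subr_eq0 (gt_eqF t1) /= subr_eq0 => /eqP ey.
  by apply: Hi0; rewrite ex ey.
have mult1 : mu < 1 by rewrite lt_neqAle mun1.
have Hc1 : 0 < 1 - mu by rewrite subr_gt0.
have Hi : 0 <= (1 - mu)^-1 by rewrite invr_ge0 ltW.
have := Q_scale Hi HW; rewrite mulVf ?gt_eqF // => HW'.
apply: Q_monoS (Q_up HW' _).
  by move=> b [Hb Hbl]; rewrite mem_filter /= Hb andbT; apply/eqP.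
move=> i; rewrite -(ler_pM2l Hc1) mulrA mulfV ?gt_eqF // mul1r.
have := HlW i; lra.
Qed.
Lemma F2fin m n (L : seq (mexp m)) : (size L <= n)%nat -> forall x,
  newton (fun a => a \in L) x -> newton (vert (fun a => a \in L)) x.
Proof.
elim: n L => [|n IH] L HL x.
  move: HL; rewrite leqn0 => /nilP ->.
  case=> k [s [l [Hs [_ [Hsum _]]]]].
  case: k s l Hs Hsum => [|k] s l Hs Hsum.
    by exfalso; move: Hsum; rewrite big_ord0 => /eqP; rewrite eq_sym oner_eq0.
  by have := Hs ord0; rewrite in_nil.
case: (classic (forall l, l \in L -> vert (fun a => a \in L) l)) => [Hall|Hnot].
  apply: newton_closure => a Ha; apply: Q_single1; exact: Hall.
have [l [Hl Hv]] : exists l, l \in L /\ ~ vert (fun a => a \in L) l.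
  apply: NNPP => H; apply: Hnot => l Hl; apply: NNPP => Hv; apply: H; by exists l.
have Hc := nonvert_claim Hl Hv.
set L' := filter (predC1 l) L in Hc.
have EN : newton (fun a => a \in L) = newton (fun a => a \in L').
  apply: newton_eq => y; split.
    apply: newton_closure => a Ha.
    case: (a =P l) => [->|ne]; first exact: Hc.
    by apply: Q_single1; rewrite /L' mem_filter /= Ha andbT; apply/eqP.
  by apply: Q_monoS => a; rewrite /L' mem_filter => /andP [].
have Hsz : (size L' <= n)%nat.
  have H1 := count_predC (pred1 l) L.
  have H2 : (0 < count (pred1 l) L)%nat by rewrite -has_count has_pred1.
  rewrite /L' size_filter.
  have -> : count (predC1 l) L = count (predC (pred1 l)) L by [].
  move: HL H2; rewrite -H1.
  move: (count (pred1 l) L) (count (predC (pred1 l)) L) => u v; lia.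
rewrite EN => Hx.
have := IH L' Hsz x Hx.
by rewrite (vert_eqN EN).
Qed.

Lemma NV m (S : mexp m -> Prop) : newton (vert S) = newton S.
Proof.
have [L [HL HL']] := dickson S.
have EL : newton (fun a => a \in L) = newton S.
  apply: newton_eq => x; split.
    by apply: Q_monoS => a; exact: HL.
  apply: newton_closure => a Ha.
  have [l Hl Hle] := HL' a Ha.
  by apply: Q_up (Q_single1 Hl) _ => i; rewrite /embedR ler_nat.
apply: newton_eq => x; split.
  by apply: Q_monoS => a; exact: vert_sub.
rewrite -EL => Hx; have := F2fin (leqnn _) Hx.
by rewrite (vert_eqN EL).
Qed.

Lemma vert_vert m (S : mexp m -> Prop) : vert (vert S) = vert S.
Proof. exact: vert_eqN (NV S). Qed.
Lemma ps_mul_supp (K : fieldType) m (f g : pseries K m) (a : mexp m) : ps_mul f g a != 0 ->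
  exists b c, f b != 0 /\ g c != 0 /\ forall i, a i = (b i + c i)%nat.
Proof.
move=> H; apply: NNPP => Hn; move: H; rewrite /ps_mul big1 ?eqxx //.
move=> B HB; apply/eqP; apply: contraT => nz; exfalso; apply: Hn.
exists [ffun i => nat_of_ord (B i)], [ffun i => (a i - B i)%nat].
move: nz; rewrite mulf_eq0 negb_or => /andP [n1 n2].
split => //; split => // i; rewrite !ffunE subnKC //.
by move/forallP: HB.
Qed.

Lemma ps_mul_single (K : fieldType) m (f g : pseries K m) (a b c : mexp m) :
  (forall i, a i = (b i + c i)%nat) ->
  (forall b' c', f b' != 0 -> g c' != 0 -> (forall i, a i = (b' i + c' i)%nat) -> b' = b) ->
  ps_mul f g a = f b * g c.
Proof.
move=> Habc Huniq; rewrite /ps_mul.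
have Hb : forall i, (b i < (\max_(i < m) a i).+1)%nat.
  by move=> i; rewrite ltnS; apply: leq_trans (leq_bigmax i); rewrite Habc leq_addr.
pose B0 : {ffun 'I_m -> 'I_(\max_(i < m) a i).+1} := [ffun i => Ordinal (Hb i)].
rewrite (bigD1 B0) /=; last by apply/forallP => i; rewrite ffunE /= Habc leq_addr.
rewrite [X in _ + X]big1 ?addr0.
  congr (f _ * g _); apply/ffunP => i; rewrite !ffunE //=.
  by rewrite Habc addKn.
move=> B /andP [HB HneB].
have [fz|fnz] := eqVneq (f [ffun i => nat_of_ord (B i)]) 0; first by rewrite fz mul0r.
have [gz|gnz] := eqVneq (g [ffun i => (a i - B i)%nat]) 0; first by rewrite gz mulr0.
exfalso.
have Hs : forall i, a i = ([ffun i => nat_of_ord (B i)] i + [ffun i => (a i - B i)%nat] i)%nat.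
  by move=> i; rewrite !ffunE subnKC //; move/forallP: HB.
have E := Huniq _ _ fnz gnz Hs.
move/eqP: HneB; apply; apply/ffunP => i; apply: val_inj.
rewrite /B0 ffunE /=; have := congr1 (fun h : mexp m => h i) E.
by rewrite ffunE.
Qed.

Definition mscale m (n : nat) (v : mexp m) : mexp m := [ffun i => (n * v i)%nat].

Definition goodh (K : fieldType) m (g : pseries K m) (h : pseries K m) : Prop :=
  forall b, h b != 0 -> newton (Supp g) (embedR b).

Lemma P1 (K : fieldType) m (g : pseries K m) (hs : seq (pseries K m)) :
  List.Forall (goodh g) hs -> forall a, ps_prod hs a != 0 ->
  Q (Supp g) (size hs)%:R (embedR a).
Proof.
elim: hs => [|h hs IH] Hall a Ha /=.
  move: Ha; rewrite /ps_prod /= /ps_one; case: (a =P mexp0 m) => [->|]; last by rewrite eqxx.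
  move=> _; have H0 : Q (Supp g) 0 (embedR (mexp0 m)).
    by apply: Q_zero => i; rewrite /embedR ffunE.
  by apply: Q_eq H0 _ _.
move/List.Forall_cons_iff: Hall => [Hh Hhs].
have [b [c [hb [pc Habc]]]] := ps_mul_supp Ha.
have := Q_add (Hh b hb) (IH Hhs c pc).
move=> H; apply: Q_eq H _ _; first by rewrite mulrS.
by move=> i; rewrite /embedR Habc natrD.
Qed.

Lemma ext_sum m (S : mexp m -> Prop) v x y (n : nat) : extreme (newton S) v ->
  Q S 1 x -> Q S n%:R y -> (forall i, (n.+1)%:R * v i = x i + y i) ->
  forall i, v i = x i.
Proof.
move=> Hext Hx Hy E.
case: n Hy E => [|n] Hy E.
  have Hy0 := Q_ge0 Hy.
  apply: (ext_ge Hext Hx) => i.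
  by have := E i; rewrite mulr1n mul1r => ->; rewrite lerDl.
set N : R := (n.+1)%:R in Hy E.
have Npos : 0 < N by rewrite /N ltr0n.
have HN : (n.+2)%:R = N + 1 by rewrite mulrSr.
rewrite HN in E.
have Hi : 0 <= N^-1 by rewrite invr_ge0 ltW.
have := Q_scale Hi Hy; rewrite mulVf ?gt_eqF // => Hy'.
have N1pos : 0 < N + 1 by rewrite addr_gt0.
apply: (ext_split Hext Hx Hy' (t := (N + 1)^-1)).
  rewrite invr_gt0 N1pos /= invf_lt1 //.
  by rewrite ltrDr.
move=> i.
have -> : v i = (N + 1)^-1 * (x i + y i) by rewrite -E mulKf ?gt_eqF.
field.
have hn : (0 : R) <= n%:R by apply: ler0n.
by apply/andP; split; rewrite gt_eqF //; lra.
Qed.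

Lemma P2 (K : fieldType) m (g : pseries K m) v (hs : seq (pseries K m)) :
  List.Forall (goodh g) hs -> extreme (newton (Supp g)) (embedR v) ->
  ps_prod hs (mscale (size hs) v) = \prod_(h <- hs) h v.
Proof.
move=> Hall Hext; elim: hs Hall => [|h hs IH] Hall.
  rewrite big_nil /ps_prod /= /ps_one.
  have -> : mscale 0 v = mexp0 m by apply/ffunP => i; rewrite !ffunE mul0n.
  by rewrite eqxx.
move/List.Forall_cons_iff: Hall => [Hh Hhs].
rewrite big_cons -(IH Hhs) /=.
apply: ps_mul_single.
  by move=> i; rewrite !ffunE mulSn.
move=> b' c' hb pc Hs.
have Hb := Hh b' hb.
have Hc := P1 Hhs pc.
apply: embedR_inj => i; apply: esym.
apply: (ext_sum Hext Hb Hc) => j.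
by rewrite /embedR -natrM -natrD -Hs ffunE.
Qed.
Lemma VBmul1r m (X : mexp m -> Prop) : VBmul X (@VB1 m) = vert X.
Proof.
rewrite /VBmul; congr vert; apply: functional_extensionality => x.
apply: propositional_extensionality; split.
  move=> [y [z [Hy [Hz ->]]]]; move: Hz; rewrite /VB1 => ->.
  by have -> : [ffun i => (y i + mexp0 m i)%nat] = y by apply/ffunP => i; rewrite !ffunE addn0.
move=> Hx; exists x, (mexp0 m); split => //; split => //.
by apply/ffunP => i; rewrite !ffunE addn0.
Qed.

Lemma VBmul1l m (X : mexp m -> Prop) : VBmul (@VB1 m) X = vert X.
Proof.
rewrite /VBmul; congr vert; apply: functional_extensionality => x.
apply: propositional_extensionality; split.
  move=> [y [z [Hy [Hz ->]]]]; move: Hy; rewrite /VB1 => ->.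
  by have -> : [ffun i => (mexp0 m i + z i)%nat] = z by apply/ffunP => i; rewrite !ffunE add0n.
move=> Hx; exists (mexp0 m), x; split => //; split => //.
by apply/ffunP => i; rewrite !ffunE add0n.
Qed.

Lemma VBeq_eq m (a b : mexp m -> Prop) : VBeq a b -> a = b.
Proof.
move=> H; apply: functional_extensionality => x.
by apply: propositional_extensionality.
Qed.

Lemma newton_union_sub m (A B C : mexp m -> Prop) :
  (forall x, newton A x -> newton C x) -> (forall x, newton B x -> newton C x) ->
  forall x, newton (fun y => A y \/ B y) x -> newton C x.
Proof.
move=> HA HB x; apply: newton_closure => a [Ha|Hb].
  by apply: HA; apply: Q_single1.
by apply: HB; apply: Q_single1.
Qed.

Lemma newton_union m (A B A' B' : mexp m -> Prop) :
  newton A = newton A' -> newton B = newton B' ->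
  newton (fun x => A x \/ B x) = newton (fun x => A' x \/ B' x).
Proof.
move=> EA EB; apply: newton_eq => x; split; apply: newton_union_sub => y.
- by rewrite EA; apply: Q_monoS => a Ha; left.
- by rewrite EB; apply: Q_monoS => a Ha; right.
- by rewrite -EA; apply: Q_monoS => a Ha; left.
- by rewrite -EB; apply: Q_monoS => a Ha; right.
Qed.

Lemma Forall_map (A B : Type) (P : B -> Prop) (F : A -> B) (s : seq A) :
  (forall x, P (F x)) -> List.Forall P (map F s).
Proof. by move=> H; elim: s => [|x s IH] /=; constructor. Qed.

Lemma Forall_nseq (A : Type) (P : A -> Prop) n x : P x -> List.Forall P (nseq n x).
Proof. by move=> H; elim: n => [|n IH] /=; constructor. Qed.
Delimit Scope nat_scope with N.
Delimit Scope ring_scope with R.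

Theorem lemma4p8 (K : fieldType) (m : nat) (HK : [pchar K]%R =i pred0)
  (f g : pseries K m) (Hg : exists a, g a != 0%R)
  (Hq : VBfrac_le (trop f) (trop g) (@VB1 m) (@VB1 m)) :
  exists n : nat, (1 <= n)%N /\ exists alpha : 'I_n -> K,
    VBfrac_ll (trop (ps_prod [seq ps_subsc f g (alpha k) | k <- enum 'I_n]))
              (trop (ps_prod (nseq n g))) (@VB1 m) (@VB1 m).
Proof.
have Nf : forall b, f b != 0 -> newton (Supp g) (embedR b).
  move: Hq; rewrite /VBfrac_le /VBle !VBmul1r /trop !vert_vert => /VBeq_eq Hq'.
  have := congr1 (@newton m) Hq'; rewrite /VBadd NV NV (newton_union (NV _) (NV _)) => E b Hb.
  by rewrite -E; apply: Q_single1; left; apply/eqP.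
have [L [HL HL']] := dickson (Supp g).
set n := size L.
have n_gt0 : (0 < n)%N.
  case: Hg => a /eqP Ha; have [l Hl _] := HL' a Ha.
  by rewrite /n; case: (L) Hl.
pose alpha := fun k : 'I_n => f (nth (mexp0 m) L k) / g (nth (mexp0 m) L k).
exists n; split => //; exists alpha.
set hs := [seq ps_subsc f g (alpha k) | k <- enum 'I_n].
set gs := nseq n g.
set P := ps_prod hs. set G := ps_prod gs.
have goodhs : List.Forall (goodh g) hs.
  apply: Forall_map => k b /=; rewrite /ps_subsc => Hb.
  have [fz|fnz] := eqVneq (f b) 0; last exact: Nf.
  apply: Q_single1; move=> gz; move: Hb; by rewrite fz gz mulr0 subrr eqxx.
have goodgs : List.Forall (goodh g) gs.
  by apply: Forall_nseq => b Hb; apply: Q_single1; apply/eqP.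
have szhs : size hs = n by rewrite /hs size_map size_enum_ord.
have szgs : size gs = n by rewrite /gs size_nseq.
have VL : forall v, vert (Supp g) v -> v \in L.
  move=> v Hv; have Hs := vert_sub Hv.
  have [l Hl Hle] := HL' v Hs.
  have Hle' : forall i, embedR l i <= embedR v i by move=> i; rewrite /embedR ler_nat.
  have E := ext_ge Hv (Q_single1 (HL l Hl)) Hle'.
  by have -> : v = l by apply: embedR_inj.
have HG : forall v, vert (Supp g) v -> G (mscale n v) != 0.
  move=> v Hv; have := P2 goodgs Hv; rewrite szgs /G => ->.
  rewrite prodf_seq_neq0 /gs all_nseq /=; apply/orP; right.
  by apply/eqP; apply: vert_sub Hv.
have HP : forall v, vert (Supp g) v -> P (mscale n v) = 0.
  move=> v Hv; have := P2 goodhs Hv; rewrite szhs /P => ->.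
  apply/eqP; rewrite prodf_seq_eq0 /hs has_map.
  have Hi : (index v L < n)%N by rewrite /n index_mem; apply: VL.
  apply/hasP; exists (Ordinal Hi); first by rewrite mem_enum.
  rewrite /= /ps_subsc /alpha /= nth_index ?VL //.
  have gv : g v != 0 by apply/eqP; apply: vert_sub Hv.
  by rewrite divfK // subrr.
have nR : (0 : R) < n%:R by rewrite ltr0n.
have K1 : forall x, Q (Supp g) n%:R x -> newton (Supp G) x.
  move=> x Hx.
  have Hi : (0 : R) <= n%:R^-1 by rewrite invr_ge0 ltW.
  have := Q_scale Hi Hx; rewrite mulVf ?gt_eqF // => Hx'.
  have : newton (vert (Supp g)) (fun i => n%:R^-1 * x i) by rewrite NV.
  case=> k [s [l [Hs [Hl [Hsum Hle]]]]].
  exists k, (fun j => mscale n (s j)), l; split.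
    by move=> j; apply/eqP; apply: HG.
  split => //; split => // i.
  have := ler_wpM2l (ltW nR) (Hle i).
  rewrite mulrA mulfV ?gt_eqF // mul1r mulr_sumr => H; apply: le_trans H.
  rewrite le_eqVlt; apply/orP; left; apply/eqP; apply: eq_bigr => j _.
  by rewrite ffunE natrM mulrCA.
have SPG : forall a, P a != 0 -> newton (Supp G) (embedR a).
  move=> a Ha; apply: K1; have := P1 goodhs Ha; by rewrite szhs.
have disj : forall w, vert (Supp P) w -> vert (Supp G) w -> False.
  move=> w HwP HwG.
  have Gw : G w != 0 by apply/eqP; apply: vert_sub HwG.
  have Hw := P1 goodgs Gw; rewrite szgs in Hw.
  have Hi : (0 : R) <= n%:R^-1 by rewrite invr_ge0 ltW.
  have := Q_scale Hi Hw; rewrite mulVf ?gt_eqF // => Hy.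
  set y := fun i => n%:R^-1 * embedR w i in Hy.
  have Hyext : extreme (newton (Supp g)) y.
    split => // a b t Ha Hb Ht E i.
    have Ka : newton (Supp G) (fun i => n%:R * a i).
      apply: K1; have := Q_scale (ltW nR) Ha; by rewrite mulr1.
    have Kb : newton (Supp G) (fun i => n%:R * b i).
      apply: K1; have := Q_scale (ltW nR) Hb; by rewrite mulr1.
    have E' : forall i, embedR w i = t * (n%:R * a i) + (1 - t) * (n%:R * b i).
      move=> j; have := E j; rewrite /y => Ej.
      have -> : embedR w j = n%:R * (n%:R^-1 * embedR w j) by rewrite mulrA mulfV ?gt_eqF // mul1r.
      rewrite Ej; ring.
    have := HwG.2 _ _ t Ka Kb Ht E' i.
    have nz : n%:R != 0 :> R by rewrite gt_eqF.
    by move/(mulfI nz).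
  have [v [Hv Ev]] := ext_in Hyext.
  have Eyv : y = embedR v by apply: functional_extensionality.
  have Vv : vert (Supp g) v by rewrite /vert -Eyv.
  have Ew : w = mscale n v.
    apply: embedR_inj => i; rewrite /embedR ffunE natrM -Ev /y.
    by rewrite mulrA mulfV ?gt_eqF // mul1r.
  by have := vert_sub HwP; rewrite /Supp Ew HP.
have EQ : VBadd (vert (Supp P)) (vert (Supp G)) = vert (Supp G).
  rewrite /VBadd; apply: vert_eqN.
  rewrite (newton_union (NV _) (NV _)).
  apply: newton_eq => x; split.
    apply: newton_union_sub => // y; apply: newton_closure => a Ha.
    by apply: SPG; apply/eqP.
  by apply: Q_monoS => a Ha; right.
rewrite /VBfrac_ll /VBfrac_le /VBll /VBle VBmul1r VBmul1r VBmul1l /trop !vert_vert -/P -/G EQ.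
split => //; split => // x [H1 H2].
exact: disj H1 H2.
Qed.
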